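(* For every $k\ge0$, the map sending a face $F$ of $I(\mathfrak{gl}_n,V\oplus\bigwedge^2)$ to the set $\{(a,b)\in\mathbb{E}^\ast_n:\vec v(a,b)\in F\}$ induces a bijection from the set of $k$-faces of $I(\mathfrak{gl}_n,V\oplus\bigwedge^2)$ onto the set of $k$-element chains of the poset $\mathbb{E}^\ast_n$.
   Context: Identify the diagonal Cartan subalgebra of $\mathfrak{gl}_n$ with $\mathbb{R}^n$ with coordinates $x_1,\dots,x_n$. Let $W=\{x_1\ge\cdots\ge x_n\}$ and $W^0=\{x_1>\cdots>x_n\}$. For $1\le i\le j\le n$ let $\lambda_{i,j}^\perp$ be the hyperplane $x_i+x_j=0$ (for $i=j$: $x_i=0$); $I(\mathfrak{gl}_n,V\oplus\bigwedge^2)$ is the arrangement of these hyperplanes restricted to $W$. Chambers are the closures of the connected components of $W^0\setminus\bigcup\lambda_{i,j}^\perp$; a face is a chamber or the intersection of a chamber with a supporting hyperplane; a $k$-face is a face whose linear span has dimension $k$. Let $\mathbb{E}^\ast_n=\{(a,b)\in\mathbb{N}^2:1\le a+b\le n\}$ with the product order $(a,b)\le(c,d)\iff a\le c$ and $b\le d$; a chain is a subset whose elements are pairwise comparable, and a $k$-chain is a chain with $k$ elements. Let $\vec v(a,b)=(1,\dots,1,0,\dots,0,-1,\dots,-1)\in\mathbb{R}^n$ with $a$ ones, $n-a-b$ zeros and $b$ minus-ones. *)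

(* Defs.v *)
From HB Require Import structures.
From mathcomp Require Import all_boot all_order all_algebra.
From mathcomp Require Import all_classical all_reals all_analysis.
Set Implicit Arguments. Unset Strict Implicit. Unset Printing Implicit Defensive.
Import Order.TTheory GRing.Theory Num.Theory.
Import numFieldNormedType.Exports.
Local Open Scope classical_set_scope.
Local Open Scope ring_scope.

Section Arrangement.
Variables (R : realType) (n : nat).

(* R^n is 'rV[R]_n, with coordinates x 0 i (i : 'I_n, 0-based). *)
Definition coord (x : 'rV[R]_n) (i : 'I_n) : R := x ord0 i.

Definition Wopen : set 'rV[R]_n :=
  [set x | forall i j : 'I_n, (i < j)%N -> coord x j < coord x i].

Definition lam_perp (i j : 'I_n) : set 'rV[R]_n :=
  [set x | if i == j then coord x i = 0 else coord x i + coord x j = 0].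

Definition arr_complement : set 'rV[R]_n :=
  [set x | Wopen x /\ forall i j : 'I_n, (i <= j)%N -> ~ lam_perp i j x].

Definition chamber (C : set 'rV[R]_n) : Prop :=
  exists2 x, arr_complement x & C = closure (connected_component arr_complement x).

Definition dotv (l x : 'rV[R]_n) : R := \sum_(i < n) coord l i * coord x i.

Definition supporting (l : 'rV[R]_n) (c : R) (C : set 'rV[R]_n) : Prop :=
  l != 0 /\ (forall x, C x -> c <= dotv l x) /\ (exists x, C x /\ dotv l x = c).

Definition face (F : set 'rV[R]_n) : Prop :=
  exists2 C, chamber C &
    (F = C \/ exists l c, supporting l c C /\ F = C `&` [set x | dotv l x = c]).

Definition span_dim (F : set 'rV[R]_n) (k : nat) : Prop :=
  exists s : seq 'rV[R]_n,
    [/\ (forall x, x \in s -> F x), (forall x, F x -> x \in (span s))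
      & \dim (span s) = k].

Definition kface (k : nat) (F : set 'rV[R]_n) : Prop := face F /\ span_dim F k.

(* E*_n = {(a,b) in N^2 : 1 <= a + b <= n}, realized inside 'I_n.+1 * 'I_n.+1 *)
Definition Estar : {set 'I_n.+1 * 'I_n.+1} :=
  [set p : 'I_n.+1 * 'I_n.+1 | (1 <= p.1 + p.2 <= n)%N].

Definition leE (p q : 'I_n.+1 * 'I_n.+1) : bool :=
  ((p.1 <= q.1)%N && (p.2 <= q.2)%N).

Definition kchain (k : nat) (S : {set 'I_n.+1 * 'I_n.+1}) : Prop :=
  [/\ S \subset Estar,
      (forall p q, p \in S -> q \in S -> leE p q || leE q p)
    & #|S| = k].

Definition vec_ab (p : 'I_n.+1 * 'I_n.+1) : 'rV[R]_n :=
  \row_(i < n) (if (i < p.1)%N then 1 else if (i < n - p.2)%N then 0 else -1).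

Definition face_to_set (F : set 'rV[R]_n) : {set 'I_n.+1 * 'I_n.+1} :=
  [set p in Estar | `[< F (vec_ab p) >]].

End Arrangement.

(* Main.v *)
Require Import Defs.
From HB Require Import structures.
From mathcomp Require Import all_boot all_order all_algebra.
From mathcomp Require Import all_classical all_reals all_analysis.
From mathcomp Require Import zify ring lra.
Import Order.TTheory GRing.Theory Num.Theory.
Import numFieldNormedType.Exports.
Local Open Scope classical_set_scope.
Local Open Scope ring_scope.

Set Implicit Arguments. Unset Strict Implicit. Unset Printing Implicit Defensive.

Section Ord.
Variable n : nat.

Lemma card_lt m : (m <= n)%N -> #|[set j : 'I_n | (j < m)%N]%SET| = m.
Proof.
move=> h.
have -> : [set j : 'I_n | (j < m)%N]%SET = (widen_ord h @: [set: 'I_m])%SET.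
  apply/setP => j; rewrite inE; apply/idP/imsetP => [jm|[k _ ->]].
    by exists (Ordinal jm) => //; apply: val_inj.
  by rewrite /= ltn_ord.
by rewrite card_imset ?cardsT ?card_ord // => a b /(congr1 val) /= /val_inj.
Qed.

Lemma down_closed (D : {set 'I_n}) :
  (forall i j : 'I_n, (j < i)%N -> i \in D -> j \in D) ->
  forall i : 'I_n, (i \in D) = (i < #|D|)%N.
Proof.
move=> hD i; apply/idP/idP => h.
  have := card_lt (ltn_ord i).
  have sub : [set j : 'I_n | (j < i.+1)%N]%SET \subset D.
    apply/fintype.subsetP => j; rewrite inE ltnS leq_eqVlt => /orP[/eqP jv|ji].
      by have -> : j = i by apply: val_inj.
    exact: hD ji h.
  by move=> e; have := subset_leq_card sub; rewrite e.
apply: contraTT h => h.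
have sub : D \subset [set j : 'I_n | (j < i)%N]%SET.
  apply/fintype.subsetP => j jD; rewrite inE ltnNge; apply/negP => ij.
  move: ij; rewrite leq_eqVlt => /orP[/eqP iv|ij].
    by move: h; rewrite (val_inj iv) jD.
  by move: h; rewrite (hD _ _ ij jD).
have := subset_leq_card sub; rewrite card_lt ?(ltnW (ltn_ord i)) //.
by rewrite -ltnNge ltnS.
Qed.

Lemma up_closed (D : {set 'I_n}) :
  (forall i j : 'I_n, (i < j)%N -> i \in D -> j \in D) ->
  forall i : 'I_n, (i \in D) = (n - #|D| <= i)%N.
Proof.
move=> hD i.
have hC : forall i j : 'I_n, (j < i)%N -> i \in ~: D -> j \in ~: D.
  move=> i1 j1 h; rewrite !inE; apply: contra; exact: hD.
have := down_closed hC i; rewrite inE => h.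
have e : #|~: D| = (n - #|D|)%N by rewrite -[X in (X - _)%N](card_ord n) -(cardsC D) addKn.
by rewrite -[i \in D]negbK h e -leqNgt.
Qed.

End Ord.

Section VAB.
Variables (R : realType) (n : nat).

Implicit Types (p q : 'I_n.+1 * 'I_n.+1) (i : 'I_n).
Definition vab (p : 'I_n.+1 * 'I_n.+1) : 'rV[R]_n := vec_ab R p.

Lemma vab_coord p i : vab p ord0 i =
  if (i < p.1)%N then 1 else if (i < n - p.2)%N then 0 else -1.
Proof. by rewrite mxE. Qed.

Lemma vab1 p i : (p.1 + p.2 <= n)%N -> (vab p ord0 i == 1) = (i < p.1)%N.
Proof.
move=> h; rewrite vab_coord; case: ifP => h1; first by rewrite eqxx ?h1.
rewrite ?h1; case: ifP => _; first by rewrite eq_sym oner_eq0.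
by apply/negbTE/eqP; lra.
Qed.

Lemma vabN1 p i : (p.1 + p.2 <= n)%N -> (vab p ord0 i == -1) = (n - p.2 <= i)%N.
Proof.
move=> h; rewrite vab_coord; case: ifP => h1.
  have -> : (n - p.2 <= i)%N = false by lia.
  by apply/negbTE/eqP; lra.
case: ifP => h2; last by rewrite eqxx leqNgt h2.
rewrite leqNgt h2 /=; apply/negbTE; rewrite eq_sym oppr_eq0; exact: oner_neq0.
Qed.

Lemma vab_vals p i : vab p ord0 i = 1 \/ vab p ord0 i = 0 \/ vab p ord0 i = -1.
Proof. by rewrite vab_coord; case: ifP => _; [left|case: ifP => _; right; [left|right]]. Qed.

Lemma le1 p q : (p.1 + p.2 <= n)%N -> (q.1 + q.2 <= n)%N ->
  (forall i, vab p ord0 i = 1 -> vab q ord0 i = 1) -> (p.1 <= q.1)%N.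
Proof.
move=> hp hq h; rewrite leqNgt; apply/negP => lt.
have hi : (q.1 < n)%N by lia.
have := h (Ordinal hi).
have e1 := vab1 (Ordinal hi) hp; have e2 := vab1 (Ordinal hi) hq.
rewrite /= ltnn lt in e1 e2; move/eqP: e1 => -> /(_ erefl) /eqP.
by rewrite e2.
Qed.

Lemma leN1 p q : (p.1 + p.2 <= n)%N -> (q.1 + q.2 <= n)%N ->
  (forall i, vab p ord0 i = -1 -> vab q ord0 i = -1) -> (p.2 <= q.2)%N.
Proof.
move=> hp hq h; rewrite leqNgt; apply/negP => lt.
have hi : (n - p.2 < n)%N by lia.
have := h (Ordinal hi).
have e1 := vabN1 (Ordinal hi) hp; have e2 := vabN1 (Ordinal hi) hq.
rewrite /= leqnn in e1; move/eqP: e1 => -> /(_ erefl) /eqP.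
by rewrite e2 /=; lia.
Qed.

Lemma vab_inj p q : (p.1 + p.2 <= n)%N -> (q.1 + q.2 <= n)%N ->
  vab p = vab q -> p = q.
Proof.
move=> hp hq e.
have h1 : (p.1 <= q.1)%N by apply: le1 => // i; rewrite e.
have h2 : (q.1 <= p.1)%N by apply: le1 => // i; rewrite e.
have h3 : (p.2 <= q.2)%N by apply: leN1 => // i; rewrite e.
have h4 : (q.2 <= p.2)%N by apply: leN1 => // i; rewrite e.
case: p q hp hq e h1 h2 h3 h4 => [a b] [c d] /= *.
by congr pair; apply: val_inj; apply/eqP; rewrite eqn_leq; apply/andP.
Qed.

Lemma vab_nz p : p \in Estar n -> exists i, vab p ord0 i != 0.
Proof.
rewrite inE => /andP[h0 h].
case: (ltnP 0 p.1) => ha.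
  have hi : (0 < n)%N by lia.
  by exists (Ordinal hi); rewrite vab_coord /= ha oner_eq0.
have hi : (n - 1 < n)%N by lia.
exists (Ordinal hi); rewrite vab_coord /=.
have -> : (n - 1 < p.1)%N = false by lia.
have -> : (n - 1 < n - p.2)%N = false by lia.
by rewrite oppr_eq0 oner_eq0.
Qed.

End VAB.

Section Ch.
Variables (R : realType) (n : nat) (x : 'rV[R]_n).
Hypothesis hx : arr_complement x.
Implicit Types (i j : 'I_n).

Definition e (i : 'I_n) : R := if 0 < x ord0 i then 1 else -1.
Definition ax (i : 'I_n) : R := `|x ord0 i|.
Definition rk (i : 'I_n) : nat := #|[set j : 'I_n | ax i < ax j]%SET|.

Lemma x_neq0 i : x ord0 i != 0.
Proof.
case: hx => _ /(_ i i (leqnn _)); rewrite /lam_perp /= eqxx => H.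
by apply/eqP.
Qed.

Lemma e_x i : e i * x ord0 i = ax i.
Proof.
rewrite /e /ax; case: ifP => h; first by rewrite mul1r gtr0_norm.
have : x ord0 i < 0.
  by rewrite lt_neqAle x_neq0 /=; rewrite ltNge in h; move/negbFE: h.
by move=> h2; rewrite ltr0_norm // mulN1r.
Qed.

Lemma ax_gt0 i : 0 < ax i.
Proof. by rewrite /ax normr_gt0 x_neq0. Qed.

Lemma ee i : e i * e i = 1.
Proof. by rewrite /e; case: ifP => _; rewrite ?mulr1 ?mulrNN ?mulr1. Qed.

Lemma e_cases i : e i = 1 \/ e i = -1.
Proof. by rewrite /e; case: ifP; [left|right]. Qed.

Lemma ax_inj i j : ax i = ax j -> i = j.
Proof.
move=> h; apply/eqP; apply: contraT => nij.
case: hx => [hw hh].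
wlog lij : i j h nij / (i < j)%N.
  move=> W; have [l|l|l] := ltngtP i j.
  - exact: (W i j).
  - by apply: (W j i) => //; rewrite eq_sym.
  - by move: nij; rewrite (val_inj l) eqxx.
have xl := hw i j lij.
have := hh i j (ltnW lij); rewrite /lam_perp /= (negbTE nij) => hne.
rewrite /Defs.coord in xl hne.
move: h; rewrite /ax.
have [hi|hi] := ltP 0 (x ord0 i); have [hj|hj] := ltP 0 (x ord0 j).
- by rewrite !gtr0_norm // => h; move: xl; lra.
- have hj' : x ord0 j < 0 by rewrite lt_neqAle x_neq0.
  by rewrite gtr0_norm // ltr0_norm // => h; exfalso; apply: hne; lra.
- have hi' : x ord0 i < 0 by rewrite lt_neqAle x_neq0.
  by move: xl; lra.
- have hi' : x ord0 i < 0 by rewrite lt_neqAle x_neq0.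
  have hj' : x ord0 j < 0 by rewrite lt_neqAle x_neq0.
  by rewrite !ltr0_norm // => h; move: xl; lra.
Qed.

Lemma rk_lt i j : (rk i < rk j)%N = (ax j < ax i).
Proof.
rewrite /rk; apply/idP/idP => h.
  rewrite ltNge; apply/negP => hle.
  move: h; rewrite ltnNge; move/negP; apply.
  apply/subset_leq_card/fintype.subsetP => k; rewrite !inE => hk; exact: le_lt_trans hle hk.
apply/proper_card/fintype.properP; split.
  apply/fintype.subsetP => k; rewrite !inE => hk; exact: lt_trans h hk.
by exists i; rewrite !inE ?ltxx.
Qed.

Lemma rk_inj : injective rk.
Proof.
move=> i j h; apply: ax_inj.
have [l|l|//] := ltgtP (ax i) (ax j).
  by move: l; rewrite -rk_lt h ltnn.
by move: l; rewrite -rk_lt h ltnn.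
Qed.

Lemma rk_ltn i : (rk i < n)%N.
Proof.
rewrite /rk; rewrite -[X in (_ < X)%N]card_ord; apply: proper_card; rewrite properE; apply/andP; split.
  exact/fintype.subsetP.
by apply/subsetPn; exists i; rewrite ?inE ?ltxx.
Qed.

Definition rko (i : 'I_n) : 'I_n := Ordinal (rk_ltn i).

Lemma rk_surj r : (r < n)%N -> exists i, rk i = r.
Proof.
move=> hr.
have inj : injective rko by move=> i j /(congr1 val) /= /rk_inj.
have := injF_onto inj (Ordinal hr).
by case/codomP => i /(congr1 val) /= ->; exists i.
Qed.


Definition G (r : nat) : 'rV[R]_n := \row_i (if (rk i <= r)%N then e i else 0).
Definition S (r : nat) (y : 'rV[R]_n) : R :=
  \sum_i (if rk i == r then e i * y ord0 i else 0).
Definition T (r : nat) (y : 'rV[R]_n) : R := S r y - S r.+1 y.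
Definition Mx : set 'rV[R]_n :=
  [set y | (forall i, 0 <= e i * y ord0 i) /\
           (forall i j, (rk i < rk j)%N -> e j * y ord0 j <= e i * y ord0 i)].

Lemma S_rk i y : S (rk i) y = e i * y ord0 i.
Proof.
rewrite /S (bigD1 i) //= eqxx big1 ?addr0 // => j nji.
by rewrite (inj_eq rk_inj) (negbTE nji).
Qed.

Lemma S_big r y : (n <= r)%N -> S r y = 0.
Proof.
move=> hr; rewrite /S big1 // => i _.
have := rk_ltn i; case: eqP => // -> h; exfalso; move: h; rewrite ltnNge hr.
by [].
Qed.

Lemma G_coord r i : G r ord0 i = if (rk i <= r)%N then e i else 0.
Proof. by rewrite mxE. Qed.

Lemma decomp y : y = \sum_(r < n) T r y *: G r.
Proof.
apply/rowP => i; rewrite summxE.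
under eq_bigr do rewrite mxE G_coord.
rewrite -(big_mkord xpredT (fun r => T r y * (if (rk i <= r)%N then e i else 0))).
rewrite (@big_cat_nat _ _ _ (rk i) 0 n _ _ (leq0n _) (ltnW (rk_ltn i))) /=.
rewrite big1_seq ?add0r; last first.
  by move=> r; rewrite mem_index_iota leq0n /= => h; rewrite leqNgt h /= mulr0.
rewrite (@eq_big_nat _ _ _ (rk i) n _ (fun r => T r y * e i)); last first.
  by move=> r; case/andP => -> _.
rewrite -mulr_suml.
have -> : \sum_(rk i <= r < n) T r y = - \sum_(rk i <= r < n) (S r.+1 y - S r y).
  by rewrite -sumrN; apply: eq_bigr => r _; rewrite /T opprB.
rewrite telescope_sumr; last exact: ltnW (rk_ltn i).
by rewrite S_big // S_rk sub0r opprK mulrC mulrA ee mul1r.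
Qed.

Lemma S_G r q : S r (G q) = if ((r < n) && (r <= q))%N then 1 else 0.
Proof.
case: (ltnP r n) => hr /=; last by rewrite S_big.
have [i <-] := rk_surj hr.
by rewrite S_rk G_coord; case: ifP; rewrite ?ee ?mulr0.
Qed.

Lemma T_G r q : (q < n)%N -> T r (G q) = (r == q)%:R.
Proof.
move=> hq; rewrite /T !S_G.
case: (ltngtP r q) => h; case: ifP => h1; case: ifP => h2; try lia;
  by rewrite ?subrr ?subr0 ?(ltn_eqF h) ?(gtn_eqF h) ?h ?eqxx.
Qed.

Lemma S_add r y z : S r (y + z) = S r y + S r z.
Proof.
rewrite /S -big_split /=; apply: eq_bigr => i _; rewrite !mxE.
by case: ifP; rewrite ?addr0 // mulrDr.
Qed.

Lemma S_scale r c y : S r (c *: y) = c * S r y.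
Proof.
rewrite /S mulr_sumr; apply: eq_bigr => i _; rewrite !mxE.
by case: ifP; rewrite ?mulr0 // mulrCA.
Qed.

Lemma T_add r y z : T r (y + z) = T r y + T r z.
Proof. by rewrite /T !S_add; ring. Qed.

Lemma T_scale r c y : T r (c *: y) = c * T r y.
Proof. by rewrite /T !S_scale; ring. Qed.

Lemma T0 r : T r 0 = 0.
Proof. by have := T_scale r 0 0; rewrite scale0r mul0r. Qed.

Lemma T_sum r I (s : seq I) (P : pred I) (c : I -> R) (w : I -> 'rV[R]_n) :
  T r (\sum_(k <- s | P k) c k *: w k) = \sum_(k <- s | P k) c k * T r (w k).
Proof.
elim/big_rec2: _ => [|k a b _ <-]; first exact: T0.
by rewrite T_add T_scale.
Qed.

Lemma Mx_T r y : Mx y -> 0 <= T r y.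
Proof.
case=> h1 h2; rewrite /T subr_ge0.
case: (ltnP r.+1 n) => h.
  have [i ei] := rk_surj h; have [j ej] := rk_surj (ltnW h).
  by rewrite -ei -ej !S_rk; apply: h2; rewrite ei ej.
rewrite (S_big y h); case: (ltnP r n) => h'.
  by have [j <-] := rk_surj h'; rewrite S_rk.
by rewrite S_big.
Qed.

Lemma G_Mx q : Mx (G q).
Proof.
split => [i|i j h]; rewrite !G_coord.
  by case: ifP; rewrite ?mulr0 ?ee.
case: ifP => hj; case: ifP => hi; rewrite ?mulr0 ?ee //.
by exfalso; move: hi; rewrite (leq_trans (ltnW h) hj).
Qed.

Lemma Mx0 : Mx 0.
Proof. by split => *; rewrite !mxE !mulr0. Qed.

Lemma MxD y z : Mx y -> Mx z -> Mx (y + z).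
Proof.
case=> [a1 a2] [b1 b2]; split => [i|i j h]; rewrite !mxE !mulrDr.
  exact: addr_ge0.
exact: lerD (a2 _ _ h) (b2 _ _ h).
Qed.

Lemma MxZ c y : 0 <= c -> Mx y -> Mx (c *: y).
Proof.
move=> hc [a1 a2]; split => [i|i j h]; rewrite !mxE.
  by rewrite mulrCA mulr_ge0.
by rewrite mulrCA [e i * _]mulrCA ler_wpM2l // a2.
Qed.


Lemma hw i j : (i < j)%N -> x ord0 j < x ord0 i.
Proof. by case: hx => h _; exact: h. Qed.

Lemma e_pos i : 0 < x ord0 i -> e i = 1.
Proof. by rewrite /e => ->. Qed.

Lemma e_neg i : x ord0 i < 0 -> e i = -1.
Proof. by rewrite /e => h; rewrite ltNge (ltW h). Qed.

Lemma x_sign i : 0 < x ord0 i \/ x ord0 i < 0.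
Proof. by have := x_neq0 i; rewrite neq_lt => /orP[h|h]; [right|left]. Qed.

Lemma se1 i v : e i * v = 1 -> v = e i.
Proof. by move=> h; rewrite -[v]mul1r -(ee i) -mulrA h mulr1. Qed.

Lemma se0 i v : e i * v = 0 -> v = 0.
Proof. by move=> h; rewrite -[v]mul1r -(ee i) -mulrA h mulr0. Qed.

Lemma vab_G (p : 'I_n.+1 * 'I_n.+1) : p \in Estar n -> Mx (vab R p) -> exists2 r, (r < n)%N & vab R p = G r.
Proof.
move=> hp [h1 h2]; set y := vab R p.
have hpn : (p.1 + p.2 <= n)%N by move: hp; rewrite inE => /andP[].
have s01 : forall i, e i * y ord0 i = 0 \/ e i * y ord0 i = 1.
  move=> i; have := h1 i; rewrite /y.
  by case: (vab_vals R p i) => [->|[->|->]]; case: (e_cases i) => ->; lra.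
have [i0 nz] := vab_nz R hp.
have Pi0 : e i0 * y ord0 i0 == 1.
  case: (s01 i0) => h; last by rewrite h.
  by move: nz; rewrite (se0 h) eqxx.
case: (@arg_maxnP _ i0 (fun i => e i * y ord0 i == 1) rk Pi0) => i1 /eqP s1 hmax.
exists (rk i1); first exact: rk_ltn.
apply/rowP => j; rewrite G_coord.
case: (ltngtP (rk j) (rk i1)) => h.
- rewrite ?(ltnW h) /=; apply: se1; have := h2 _ _ h; rewrite s1.
  by case: (s01 j) => ->; lra.
- rewrite ?(leqNgt _ (rk i1)) ?h /=; case: (s01 j) => hj; first exact: se0 hj.
  by have := hmax j; rewrite hj eqxx => /(_ isT) g; move: h; rewrite ltnNge; move: g; rewrite /geq /= => ->.
- by rewrite ?h ?leqnn /=; have -> := rk_inj h; apply: se1.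
Qed.

Lemma G_vab r : (r < n)%N -> exists2 p, p \in Estar n & G r = vab R p.
Proof.
move=> hr.
set A := [set i | (rk i <= r)%N && (0 < x ord0 i)]%SET.
set B := [set i | (rk i <= r)%N && (x ord0 i < 0)]%SET.
have hA := @down_closed n A.
have hB := @up_closed n B.
have {hA} hA : forall i, (i \in A) = (i < #|A|)%N.
  apply: hA => i j ji; rewrite !inE => /andP[ri xi].
  have xj : x ord0 i < x ord0 j by exact: hw.
  have rj : (rk j < rk i)%N.
    by rewrite rk_lt /ax !gtr0_norm //; lra.
  by rewrite (leq_trans (ltnW rj) ri) /=; lra.
have {hB} hB : forall i, (i \in B) = (n - #|B| <= i)%N.
  apply: hB => i j ij; rewrite !inE => /andP[ri xi].
  have xj : x ord0 j < x ord0 i by exact: hw.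
  have rj : (rk j < rk i)%N.
    by rewrite rk_lt /ax !ltr0_norm //; lra.
  by rewrite (leq_trans (ltnW rj) ri) /=; lra.
have an : (#|A| <= n)%N by rewrite -[X in (_ <= X)%N](card_ord n) max_card.
have bn : (#|B| <= n)%N by rewrite -[X in (_ <= X)%N](card_ord n) max_card.
exists (inord #|A|, inord #|B|).
  rewrite inE /= !inordK ?ltnS //.
  have [i0 ri0] := rk_surj (leq_ltn_trans (leq0n r) hr).
  apply/andP; split.
    case: (x_sign i0) => s0.
      have : i0 \in A by rewrite inE ri0 leq0n s0.
      by rewrite hA => h; rewrite addn_gt0 (leq_ltn_trans (leq0n _) h).
    have : i0 \in B by rewrite inE ri0 leq0n s0.
    rewrite hB => h; rewrite addn_gt0 orbC; apply/orP; left; rewrite lt0n; apply/negP => /eqP b0.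
    by move: h; rewrite b0 subn0 leqNgt ltn_ord.
  rewrite leqNgt; apply/negP => big.
  have hi : (#|A| - 1 < n)%N.
    by move: big an bn hr; move: (#|A|) (#|B|) => a b; lia.
  have iA : Ordinal hi \in A.
    by rewrite hA /=; move: big an bn hr; move: (#|A|) (#|B|) => a b; lia.
  have iB : Ordinal hi \in B.
    by rewrite hB /=; move: big an bn hr; move: (#|A|) (#|B|) => a b; lia.
  by move: iA iB; rewrite !inE => /andP[_ p1] /andP[_ p2]; move: (lt_trans p1 p2); rewrite ltxx.
apply/rowP => i; rewrite G_coord vab_coord /= !inordK ?ltnS //.
have eA := hA i; have eB := hB i; rewrite !inE in eA eB.
case: (boolP (rk i <= r)%N) => ri.
  rewrite ri /= in eA eB.
  case: (x_sign i) => s.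
    by rewrite (e_pos s) -eA s.
  rewrite (e_neg s) -eA.
  have -> : (0 < x ord0 i) = false by apply/negbTE; rewrite -leNgt ltW.
  by rewrite ltnNge -eB s.
rewrite (negbTE ri) /= in eA eB.
by rewrite -eA ltnNge -eB.
Qed.

Lemma G_mono r r' i : (r <= r')%N -> G r ord0 i != 0 -> G r' ord0 i = G r ord0 i.
Proof.
move=> hr; rewrite !G_coord; case: ifP => h; last by rewrite eqxx.
by rewrite (leq_trans h hr).
Qed.

Lemma chain_G (p q : 'I_n.+1 * 'I_n.+1) r r' : (p.1 + p.2 <= n)%N -> (q.1 + q.2 <= n)%N ->
  vab R p = G r -> vab R q = G r' -> (r <= r')%N -> leE p q.
Proof.
move=> hp hq ep eq hr; rewrite /leE; apply/andP; split.
  apply: (le1 (R:=R)) => // i; rewrite ep eq => h; rewrite (G_mono hr) // h; exact: oner_neq0.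
apply: (leN1 (R:=R)) => // i; rewrite ep eq => h; rewrite (G_mono hr) // h oppr_eq0; exact: oner_neq0.
Qed.

End Ch.

Section Topo.
Variables (R : realType) (n : nat) (x : 'rV[R]_n).
Hypothesis hx : arr_complement x.
Implicit Types (i j : 'I_n).
Notation e := (e x). Notation rk := (rk x). Notation Mx := (Mx x).

Lemma cont1 (a : R) i : continuous (fun y : 'rV[R]_n => a * y ord0 i).
Proof.
move=> y; apply: (continuousM (s := fun _ : 'rV[R]_n => a) (t := fun y : 'rV[R]_n => y ord0 i)).
  exact: cst_continuous.
exact: coord_continuous.
Qed.

Lemma cont2 (a b : R) i j : continuous (fun y : 'rV[R]_n => a * y ord0 i - b * y ord0 j).
Proof.
move=> y; apply: (continuousB (f := fun y : 'rV[R]_n => a * y ord0 i) (g := fun y : 'rV[R]_n => b * y ord0 j)).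
  exact: cont1.
exact: cont1.
Qed.

Lemma conn_pos (B : set 'rV[R]_n) (f : 'rV[R]_n -> R) : connected B -> continuous f ->
  (forall y, B y -> f y != 0) -> B x -> 0 < f x -> forall y, B y -> 0 < f y.
Proof.
move=> cB cf nz Bx fx y By.
have := connected_continuous_connected cB (continuous_subspaceT cf).
move/connected_intervalP => iv.
rewrite ltNge; apply/negP => fy.
have : (f @` B) 0.
  apply: (iv (f y) (f x)); [by exists y|by exists x|by rewrite fy ltW].
by case=> z Bz fz; move: (nz z Bz); rewrite fz eqxx.
Qed.


Definition Ux : set 'rV[R]_n :=
  [set y | (forall i, 0 < e i * y ord0 i) /\
           (forall i j, (rk i < rk j)%N -> e j * y ord0 j < e i * y ord0 i)].

Lemma rk_sign_pos i j : (i < j)%N -> 0 < x ord0 j -> (rk i < rk j)%N.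
Proof.
move=> ij hj; have := hw hx ij => xl.
by rewrite rk_lt /ax !gtr0_norm //; lra.
Qed.

Lemma rk_sign_neg i j : (i < j)%N -> x ord0 i < 0 -> (rk j < rk i)%N.
Proof.
move=> ij hi; have := hw hx ij => xl.
by rewrite rk_lt /ax !ltr0_norm //; lra.
Qed.

Lemma sign_ord i j : (i < j)%N -> x ord0 i < 0 -> x ord0 j < 0.
Proof. by move=> ij hi; have := hw hx ij; lra. Qed.

Lemma U1 y : Ux y -> arr_complement y.
Proof.
case=> h1 h2; split.
  move=> i j ij; rewrite /Defs.coord.
  case: (x_sign hx i) => si.
    have pi := h1 i; rewrite (e_pos si) in pi.
    case: (x_sign hx j) => sj.
      have := h2 _ _ (rk_sign_pos ij sj); rewrite (e_pos si) (e_pos sj); lra.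
    have := h1 j; rewrite (e_neg sj); lra.
  have sj := sign_ord ij si.
  have := h2 _ _ (rk_sign_neg ij si); rewrite (e_neg si) (e_neg sj); lra.
move=> i j ij; rewrite /lam_perp /= /Defs.coord.
case: eqP => [e1|nij]; first subst j.
  have := h1 i; case: (e_cases x i) => -> ? ?; lra.
have hr : rk i != rk j by apply/eqP => /(rk_inj hx) e1; move: nij; rewrite e1.
have := h1 i; have := h1 j.
case: (x_sign hx i) => si; rewrite ?(e_pos si) ?(e_neg si);
case: (x_sign hx j) => sj; rewrite ?(e_pos sj) ?(e_neg sj); try lra;
case: (ltngtP (rk i) (rk j)) hr => // r _; have := h2 _ _ r;
rewrite ?(e_pos si) ?(e_neg si) ?(e_pos sj) ?(e_neg sj); lra.
Qed.

Lemma U2 : Ux x.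
Proof.
split => [i|i j h]; rewrite !e_x //; first exact: ax_gt0.
by rewrite -rk_lt.
Qed.

Lemma cvx_pos (a b t : R) : 0 < a -> 0 < b -> 0 <= t -> t <= 1 -> 0 < (1 - t) * a + t * b.
Proof.
move=> ha hb t0 t1.
case: (leP a b) => h.
  have : 0 <= t * (b - a) by apply: mulr_ge0; lra.
  have -> : (1 - t) * a + t * b = a + t * (b - a) by ring.
  lra.
have : 0 <= (1 - t) * (a - b) by apply: mulr_ge0; lra.
have -> : (1 - t) * a + t * b = b + (1 - t) * (a - b) by ring.
lra.
Qed.

Lemma U3 y z t : Ux y -> Ux z -> 0 <= t <= 1 -> Ux (y + t *: (z - y)).
Proof.
case=> y1 y2 [z1 z2] /andP[t0 t1]; split => [i|i j h]; rewrite !mxE.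
  have := y1 i; have := z1 i.
  have -> : e i * (y ord0 i + t * (z ord0 i - y ord0 i)) =
    (1 - t) * (e i * y ord0 i) + t * (e i * z ord0 i) by ring.
  by move=> *; apply: cvx_pos.
have := y2 _ _ h; have := z2 _ _ h.
have -> : e i * (y ord0 i + t * (z ord0 i - y ord0 i)) =
  (1 - t) * (e i * y ord0 i) + t * (e i * z ord0 i) by ring.
have -> : e j * (y ord0 j + t * (z ord0 j - y ord0 j)) =
  (1 - t) * (e j * y ord0 j) + t * (e j * z ord0 j) by ring.
move=> a b; rewrite -subr_gt0.
have -> : (1 - t) * (e i * y ord0 i) + t * (e i * z ord0 i) -
  ((1 - t) * (e j * y ord0 j) + t * (e j * z ord0 j)) =
  (1 - t) * (e i * y ord0 i - e j * y ord0 j) + t * (e i * z ord0 i - e j * z ord0 j) by ring.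
by apply: cvx_pos => //; rewrite subr_gt0.
Qed.

Lemma compl_props (y : 'rV[R]_n) : arr_complement y ->
  (forall i, y ord0 i != 0) /\ (forall i j, i != j -> y ord0 i != y ord0 j) /\
  (forall i j, i != j -> y ord0 i + y ord0 j != 0).
Proof.
case=> hw' hh; split; [|split].
- move=> i; have := hh i i (leqnn _); rewrite /lam_perp /= eqxx /Defs.coord.
  by move=> h; apply/eqP.
- move=> i j nij; have [l|l|l] := ltngtP i j.
  + by have := hw' i j l; rewrite /Defs.coord => h; apply/eqP => e1; move: h; rewrite e1 ltxx.
  + by have := hw' j i l; rewrite /Defs.coord => h; apply/eqP => e1; move: h; rewrite e1 ltxx.
  + by move: nij; rewrite (val_inj l) eqxx.
- move=> i j nij; have [l|l|l] := ltngtP i j.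
  + have := hh i j (ltnW l); rewrite /lam_perp /= (negbTE nij) /Defs.coord.
    by move=> h; apply/eqP.
  + have := hh j i (ltnW l); rewrite /lam_perp /= eq_sym (negbTE nij) /Defs.coord.
    by move=> h; apply/eqP; rewrite addrC.
  + by move: nij; rewrite (val_inj l) eqxx.
Qed.

Lemma U4 (B : set 'rV[R]_n) : connected B -> B `<=` @arr_complement R n -> B x -> B `<=` Ux.
Proof.
move=> cB sB Bx y By; split.
  move=> i; apply: (conn_pos (f := fun y => e i * y ord0 i)) cB _ _ Bx _ y By.
  - exact: cont1.
  - move=> z /sB /compl_props [h _]; rewrite mulf_neq0 //.
    by case: (e_cases x i) => ->; rewrite ?oppr_eq0 oner_eq0.
  - by rewrite /= (e_x hx) (ax_gt0 hx).
move=> i j h.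
have nij : i != j by apply/eqP => e1; move: h; rewrite e1 ltnn.
rewrite -subr_gt0.
apply: (conn_pos (f := fun y => e i * y ord0 i - e j * y ord0 j)) cB _ _ Bx _ y By.
- exact: cont2.
- move=> z /sB /compl_props [_ [h2 h3]]; have := h2 _ _ nij; have := h3 _ _ nij.
  move=> /eqP a /eqP b; apply/eqP => c; case: (e_cases x i) c => ->;
  case: (e_cases x j) => -> c; [apply: b| apply: a | apply: a | apply: b]; lra.
- by rewrite /= !(e_x hx) subr_gt0 -rk_lt.
Qed.

Lemma comp_eq : connected_component (@arr_complement R n) x = Ux.
Proof.
apply/seteqP; split.
  apply: U4; [exact: component_connected|exact: connected_component_sub|].
  exact: connected_component_refl.
move=> z Uz.
pose f := fun t : R => x + t *: (z - x).
have cf : continuous f.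
  move=> t; apply: (continuousD (f := fun _ : R => x) (g := fun t : R => t *: (z - x))).
    exact: cst_continuous.
  by apply: (continuousZr_tmp (s := fun t : R => t)); exact: cvg_id.
apply: (connected_component_max (B := f @` `[0, 1])).
- by exists 0; [rewrite /= in_itv /= lexx ler01|rewrite /f scale0r addr0].
- move=> _ [t ht <-]; apply: U1; apply: U3; [exact: U2|exact: Uz|].
  by move: ht; rewrite /= in_itv /=.
- apply: connected_continuous_connected; first exact: segment_connected.
  exact: continuous_subspaceT.
- by exists 1; [rewrite /= in_itv /= lexx ler01|rewrite /f scale1r addrC subrK].
Qed.


Lemma cvx_pos2 (a b t : R) : 0 <= a -> 0 < b -> 0 < t -> t <= 1 -> 0 < (1 - t) * a + t * b.
Proof.
move=> ha hb t0 t1.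
have : 0 <= (1 - t) * a by apply: mulr_ge0; lra.
have : 0 < t * b by apply: mulr_gt0.
lra.
Qed.

Lemma open_neg (f : 'rV[R]_n -> R) : continuous f -> open [set z | f z < 0].
Proof.
move=> cf.
have -> : [set z | f z < 0] = f @^-1` [set r | r < 0] by [].
apply: open_comp; last exact: open_lt.
by move=> z _; exact: cf.
Qed.

Lemma clos_sub : closure Ux `<=` Mx.
Proof.
move=> y cy; split.
  move=> i; rewrite leNgt; apply/negP => hneg.
  have nb : nbhs y [set z | e i * z ord0 i < 0].
    by apply: open_nbhs_nbhs; split => //; apply: open_neg; exact: cont1.
  have [z [[Uz _] Oz]] := cy _ nb.
  by have := Uz i; rewrite /= in Oz; lra.
move=> i j h; rewrite leNgt; apply/negP => hneg.
have nb : nbhs y [set z | e i * z ord0 i - e j * z ord0 j < 0].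
  apply: open_nbhs_nbhs; split; last by rewrite /=; lra.
  by apply: open_neg; exact: cont2.
have [z [[_ Uz] Oz]] := cy _ nb.
by have := Uz _ _ h; rewrite /= in Oz; lra.
Qed.

Lemma clos_sup : Mx `<=` closure Ux.
Proof.
move=> y [m1 m2] B /nbhs_ballP [eps /= eps0 hB].
set N := `|x - y|.
have N0 : 0 <= N by exact: normr_ge0.
set t := eps / (N + eps).
have t0 : 0 < t by apply: divr_gt0 => //; lra.
have t1 : t <= 1 by rewrite /t ler_pdivrMr ?mul1r; lra.
have tN : t * N < eps.
  rewrite /t mulrAC ltr_pdivrMr; last lra.
  by rewrite mulrDr ltrDl; apply: mulr_gt0.
exists (y + t *: (x - y)); split.
  split => [i|i j h]; rewrite !mxE.
    have -> : e i * (y ord0 i + t * (x ord0 i - y ord0 i)) =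
      (1 - t) * (e i * y ord0 i) + t * (e i * x ord0 i) by ring.
    by apply: cvx_pos2 => //; rewrite (e_x hx) (ax_gt0 hx).
  rewrite -subr_gt0.
  have -> : e i * (y ord0 i + t * (x ord0 i - y ord0 i)) -
      e j * (y ord0 j + t * (x ord0 j - y ord0 j)) =
    (1 - t) * (e i * y ord0 i - e j * y ord0 j) +
      t * (e i * x ord0 i - e j * x ord0 j) by ring.
  apply: cvx_pos2 => //; first by rewrite subr_ge0; exact: m2.
  by rewrite !(e_x hx) subr_gt0 -rk_lt.
apply: hB; rewrite -ball_normE /= opprD addrA subrr add0r normrN normrZ.
by rewrite gtr0_norm.
Qed.

Lemma clos_eq : closure Ux = Mx.
Proof. by apply/seteqP; split; [exact: clos_sub|exact: clos_sup]. Qed.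

End Topo.

Section Dot.
Variables (R : realType) (n : nat).
Implicit Types (l y z : 'rV[R]_n).

Lemma dotvE l y : dotv l y = \sum_i l ord0 i * y ord0 i.
Proof. by []. Qed.

Lemma dotv_addr l y z : dotv l (y + z) = dotv l y + dotv l z.
Proof. by rewrite !dotvE -big_split; apply: eq_bigr => i _; rewrite mxE mulrDr. Qed.

Lemma dotv_scaler l c y : dotv l (c *: y) = c * dotv l y.
Proof. by rewrite !dotvE mulr_sumr; apply: eq_bigr => i _; rewrite mxE mulrCA. Qed.

Lemma dotv_addl l z y : dotv (l + z) y = dotv l y + dotv z y.
Proof. by rewrite !dotvE -big_split; apply: eq_bigr => i _; rewrite mxE mulrDl. Qed.

Lemma dotv0r l : dotv l 0 = 0.
Proof. by have := dotv_scaler l 0 0; rewrite scale0r mul0r. Qed.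

Lemma dotv0l y : dotv 0 y = 0.
Proof. by rewrite dotvE big1 // => i _; rewrite mxE mul0r. Qed.

Lemma dotv_sumr l I (s : seq I) (P : pred I) (c : I -> R) (w : I -> 'rV[R]_n) :
  dotv l (\sum_(k <- s | P k) c k *: w k) = \sum_(k <- s | P k) c k * dotv l (w k).
Proof.
elim/big_rec2: _ => [|k a b _ <-]; first exact: dotv0r.
by rewrite dotv_addr dotv_scaler.
Qed.

Lemma dotv_suml I (s : seq I) (P : pred I) (w : I -> 'rV[R]_n) y :
  dotv (\sum_(k <- s | P k) w k) y = \sum_(k <- s | P k) dotv (w k) y.
Proof.
elim/big_rec2: _ => [|k a b _ <-]; first exact: dotv0l.
by rewrite dotv_addl.
Qed.

End Dot.

Section Faces.
Variables (R : realType) (n : nat).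
Implicit Types (x y : 'rV[R]_n) (Z : pred nat) (A : {set 'I_n.+1 * 'I_n.+1}).

Definition Fz x Z : set 'rV[R]_n :=
  [set y | Mx x y /\ forall r, (r < n)%N -> ~~ Z r -> T x r y = 0].

Definition pcone (A : {set 'I_n.+1 * 'I_n.+1}) : set 'rV[R]_n :=
  [set y | exists c : 'I_n.+1 * 'I_n.+1 -> R,
     (forall q, 0 <= c q) /\ y = \sum_(q in A) c q *: vab R q].

Lemma chamberP (C : set 'rV[R]_n) : chamber C -> exists2 x, arr_complement x & C = Mx x.
Proof. by case=> x hx ->; exists x => //; rewrite comp_eq // clos_eq. Qed.

Lemma chamber_Mx x : arr_complement x -> chamber (Mx x).
Proof. by move=> hx; exists x => //; rewrite comp_eq // clos_eq. Qed.

Lemma dotv_decomp x l y : arr_complement x ->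
  dotv l y = \sum_(r < n) T x r y * dotv l (G x r).
Proof. by move=> hx; rewrite {1}(decomp hx y) dotv_sumr. Qed.

Lemma face_inv (F : set 'rV[R]_n) : face F -> exists2 x, arr_complement x & exists Z, F = Fz x Z.
Proof.
case=> C /chamberP [x hx ->] [->|[l [c [[l0 [hge [y0 [My0 ly0]]]] ->]]]].
  exists x => //; exists predT; apply/seteqP; split => y; first by move=> My; split.
  by case.
exists x => //.
have c0 : c <= 0 by have := hge 0 (Mx0 x); rewrite dotv0r.
have lam0 : forall r : 'I_n, 0 <= dotv l (G x r).
  move=> r; rewrite leNgt; apply/negP => neg.
  set mu := (c - 1) / dotv l (G x r).
  have mu0 : 0 <= mu by apply: mulr_le0; [lra|rewrite invr_le0; exact: ltW].
  have := hge _ (MxZ mu0 (G_Mx x r)); rewrite dotv_scaler /mu mulfVK; first lra.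
  by rewrite lt_eqF.
have ceq : c = 0.
  apply/eqP; rewrite eq_le c0 -ly0 (dotv_decomp _ _ hx) /=.
  by apply: sumr_ge0 => r _; apply: mulr_ge0; [exact: Mx_T|exact: lam0].
exists (fun r => dotv l (G x r) == 0).
apply/seteqP; split => y.
  case=> My; rewrite /= ceq (dotv_decomp _ _ hx) => hs; split => // r hr nz.
  have := psumr_eq0P (P := xpredT) (fun (i : 'I_n) (_ : true) => mulr_ge0 (Mx_T hx i My) (lam0 i)) hs (i := Ordinal hr) isT.
  by move=> /eqP; rewrite mulf_eq0 /= (negbTE nz) orbF => /eqP.
case=> My hT; split => //=; rewrite ceq (dotv_decomp _ _ hx) big1 // => r _.
case: (boolP (dotv l (G x r) == 0)) => [/eqP ->|nz]; first by rewrite mulr0.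
by rewrite hT ?mul0r.
Qed.


Definition tv x (r : nat) : 'rV[R]_n :=
  \row_i ((if rk x i == r then e x i else 0) - (if rk x i == r.+1 then e x i else 0)).

Lemma dotv_tv x r y : dotv (tv x r) y = T x r y.
Proof.
rewrite dotvE /T /S -sumrB; apply: eq_bigr => i _; rewrite mxE.
by case: ifP; case: ifP => *; ring.
Qed.

Lemma Fz0 x Z : Fz x Z 0.
Proof. by split; [exact: Mx0|move=> r _ _; exact: T0]. Qed.

Lemma FzD x Z y z : Fz x Z y -> Fz x Z z -> Fz x Z (y + z).
Proof.
case=> [My hy] [Mz hz]; split; first exact: MxD.
by move=> r hr nz; rewrite T_add hy ?hz ?addr0.
Qed.

Lemma FzZ x Z c y : 0 <= c -> Fz x Z y -> Fz x Z (c *: y).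
Proof.
move=> c0 [My hy]; split; first exact: MxZ.
by move=> r hr nz; rewrite T_scale hy ?mulr0.
Qed.

Lemma Fz_face x Z : arr_complement x -> face (Fz x Z).
Proof.
move=> hx; exists (Mx x); first exact: chamber_Mx.
case: (boolP [forall r : 'I_n, Z r]) => [/forallP allZ|/forallPn [r0 nz0]].
  left; apply/seteqP; split => y; first by case.
  by move=> My; split => // r hr; rewrite (allZ (Ordinal hr)).
right; exists (\sum_(r < n | ~~ Z r) tv x r), 0.
have dL : forall y, dotv (\sum_(r < n | ~~ Z r) tv x r) y = \sum_(r < n | ~~ Z r) T x r y.
  by move=> y; rewrite dotv_suml; apply: eq_bigr => r _; rewrite dotv_tv.
split; first split; [|split|].
- apply/eqP => L0.
  have := dL (G x r0); rewrite L0 dotv0l (bigD1 r0) //= (T_G hx) // eqxx big1 ?addr0.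
    by move=> /eqP; rewrite eq_sym oner_eq0.
  move=> r /andP[_ nr]; rewrite (T_G hx) //.
  by case: eqP => // /val_inj e1; move: nr; rewrite e1 eqxx.
- by move=> y My; rewrite dL; apply: sumr_ge0 => r _; exact: Mx_T.
- by exists 0; split; [exact: Mx0|exact: dotv0r].
apply/seteqP; split => y.
  case=> My hy; split => //=; rewrite dL big1 // => r nr; exact: hy.
case=> My /=; rewrite dL => hs; split => // r hr nr.
exact: (psumr_eq0P (P := fun r : 'I_n => ~~ Z r) (fun (i : 'I_n) _ => Mx_T hx i My) hs (i := Ordinal hr) nr).
Qed.

Lemma FS_Fz x Z (p : 'I_n.+1 * 'I_n.+1) : arr_complement x ->
  (p \in face_to_set (Fz x Z)) = (p \in Estar n) && [exists r : 'I_n, Z r && (vab R p == G x r)].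
Proof.
move=> hx; rewrite inE; apply/andP/andP => [[hE /asboolP [My hT]]|[hE /existsP [r /andP[zr /eqP ep]]]].
  split => //; have [r hr ep] := vab_G hx hE My.
  apply/existsP; exists (Ordinal hr); rewrite /= ep eqxx andbT.
  apply: contraT => nz; have := hT r hr nz; rewrite -/(vab R p) ep (T_G hx) // eqxx.
  by move/eqP; rewrite oner_eq0.
split => //; apply/asboolP; rewrite -/(vab R p) ep; split; first exact: G_Mx.
move=> r' hr' nz; rewrite (T_G hx) //; case: eqP => // e1.
by move: nz; rewrite e1 zr.
Qed.

Lemma pcone0 A : pcone A 0.
Proof. by exists (fun _ => 0); split => // ; rewrite big1 // => q _; rewrite scale0r. Qed.

Lemma pconeD A y z : pcone A y -> pcone A z -> pcone A (y + z).
Proof.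
case=> c [c0 ->] [d [d0 ->]]; exists (fun q => c q + d q); split.
  by move=> q; apply: addr_ge0.
by rewrite -big_split; apply: eq_bigr => q _; rewrite scalerDl.
Qed.

Lemma pconeZ A m y : 0 <= m -> pcone A y -> pcone A (m *: y).
Proof.
move=> m0 [c [c0 ->]]; exists (fun q => m * c q); split.
  by move=> q; apply: mulr_ge0.
by rewrite scaler_sumr; apply: eq_bigr => q _; rewrite scalerA.
Qed.

Lemma pcone_gen (A : {set 'I_n.+1 * 'I_n.+1}) q0 : q0 \in A -> pcone A (vab R q0).
Proof.
move=> hq; exists (fun q => (q == q0)%:R); split.
  by move=> q; case: eqP.
rewrite (bigD1 q0) //= eqxx scale1r big1 ?addr0 // => q /andP[_ nq].
by rewrite (negbTE nq) scale0r.
Qed.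

Lemma Fz_pcone x Z : arr_complement x -> Fz x Z = pcone (face_to_set (Fz x Z)).
Proof.
move=> hx; apply/seteqP; split => y.
  move=> Fy; rewrite (decomp hx y).
  apply: (big_ind (pcone _)); [exact: pcone0|exact: pconeD|] => r _.
  case: (boolP (Z r)) => zr; last first.
    by case: Fy => _ h; rewrite h // scale0r; exact: pcone0.
  have [p hE ep] := G_vab hx (ltn_ord r).
  rewrite ep; apply: pconeZ; first by case: Fy => My _; exact: Mx_T.
  apply: pcone_gen; rewrite FS_Fz // hE /=; apply/existsP; exists r.
  by rewrite zr ep eqxx.
case=> c [c0 ->]; apply: (big_ind (Fz x Z)); [exact: Fz0|exact: FzD|] => q hq.
apply: FzZ => //; move: hq; rewrite inE => /andP[_ /asboolP]; done.
Qed.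

End Faces.

Section Span.
Variables (R : realType) (n : nat).
Implicit Types (x y : 'rV[R]_n) (Z : pred nat) (A : {set 'I_n.+1 * 'I_n.+1}).

Definition Gs x : seq 'rV[R]_n := [seq G x r | r <- iota 0 n].
Definition Wseq A : seq 'rV[R]_n := [seq vab R q | q <- enum A].

Lemma free_Gs x : arr_complement x -> free (Gs x).
Proof.
move=> hx; rewrite /free size_map size_iota.
have -> : <<Gs x>>%VS = fullv.
  apply/eqP; rewrite eqEsubv subvf /=; apply/subvP => y _.
  rewrite (decomp hx y); apply: memv_suml => r _; apply: memvZ; apply: memv_span.
  by apply/mapP; exists (nat_of_ord r) => //; rewrite mem_iota /= add0n ltn_ord.
by rewrite dimvf /dim /= mul1n.
Qed.

Lemma pcone_span A y : pcone A y -> y \in <<Wseq A>>%VS.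
Proof.
case=> c [_ ->]; apply: memv_suml => q hq; apply: memvZ; apply: memv_span.
by apply/mapP; exists q => //; rewrite mem_enum.
Qed.

Lemma FS_Estar (F : set 'rV[R]_n) p : p \in face_to_set F -> p \in Estar n.
Proof. by rewrite inE => /andP[]. Qed.

Lemma FS_F (F : set 'rV[R]_n) p : p \in face_to_set F -> F (vab R p).
Proof. by rewrite inE => /andP[_ /asboolP]. Qed.

Lemma Estar_le p : p \in Estar n -> (p.1 + p.2 <= n)%N.
Proof. by rewrite inE => /andP[]. Qed.

Lemma free_W x Z : arr_complement x -> free (Wseq (face_to_set (Fz x Z))).
Proof.
move=> hx; set FS := face_to_set (Fz x Z).
have hG := free_Gs hx.
rewrite (@perm_free _ _ _ [seq w <- Gs x | `[< Fz x Z w >]]); first exact: filter_free.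
apply: uniq_perm.
- rewrite map_inj_in_uniq ?enum_uniq // => p q; rewrite !mem_enum => hp hq.
  exact: vab_inj (Estar_le (FS_Estar hp)) (Estar_le (FS_Estar hq)).
- exact/filter_uniq/free_uniq.
move=> w; rewrite mem_filter; apply/mapP/andP => [[q hq ->]|[/asboolP Fw /mapP [r hr ew]]].
  rewrite mem_enum in hq; split; first by apply/asboolP; exact: FS_F hq.
  move: hq; rewrite FS_Fz // => /andP[_ /existsP [r /andP[_ /eqP ->]]].
  by apply/mapP; exists (nat_of_ord r) => //; rewrite mem_iota /= add0n ltn_ord.
have hrn : (r < n)%N by move: hr; rewrite mem_iota add0n.
have [q hE eq] := G_vab hx hrn.
exists q; last by rewrite ew eq.
by rewrite mem_enum inE hE /=; apply/asboolP; rewrite -/(vab R q) -eq -ew.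
Qed.

Lemma span_dim_Fz x Z k : arr_complement x ->
  span_dim (Fz x Z) k <-> k = #|face_to_set (Fz x Z)|.
Proof.
move=> hx; set FS := face_to_set (Fz x Z).
have hP := Fz_pcone Z hx.
have dimW : \dim <<Wseq FS>> = #|FS|.
  by have := free_W Z hx; rewrite /free => /eqP ->; rewrite size_map cardE.
split.
  case=> s [sF Fs <-]; rewrite -dimW; congr (\dim _); apply/eqP; rewrite eqEsubv.
  apply/andP; split; apply/span_subvP => v hv.
    by apply: pcone_span; rewrite -/FS -hP; exact: sF.
  apply: Fs; case/mapP: hv => q hq ->; rewrite mem_enum in hq; exact: FS_F hq.
move=> ->; exists (Wseq FS); split => //.
  move=> v /mapP [q hq ->]; rewrite mem_enum in hq; exact: FS_F hq.
by move=> v; rewrite hP; exact: pcone_span.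
Qed.

Lemma chain_Fz x Z p q : arr_complement x ->
  p \in face_to_set (Fz x Z) -> q \in face_to_set (Fz x Z) -> leE p q || leE q p.
Proof.
move=> hx hp hq.
have hpE := Estar_le (FS_Estar hp); have hqE := Estar_le (FS_Estar hq).
move: hp hq; rewrite !FS_Fz // => /andP[_ /existsP [r /andP[_ /eqP ep]]] /andP[_ /existsP [r' /andP[_ /eqP eq]]].
case: (leqP r r') => h.
  by rewrite (chain_G hpE hqE ep eq h).
by rewrite (chain_G hqE hpE eq ep (ltnW h)) orbT.
Qed.

End Span.

Section Constr.
Variables (R : realType) (n : nat) (S : {set 'I_n.+1 * 'I_n.+1}).
Hypothesis hS : S \subset Estar n.
Hypothesis hC : forall p q, p \in S -> q \in S -> leE p q || leE q p.
Implicit Types (i j : 'I_n) (p q : 'I_n.+1 * 'I_n.+1).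

Lemma supp_iff p i : (p.1 + p.2 <= n)%N ->
  (vab R p ord0 i != 0) = (i < p.1)%N || (n - p.2 <= i)%N.
Proof.
move=> h; rewrite vab_coord; case: ifP => h1; first by rewrite oner_eq0.
case: ifP => h2; first by rewrite eqxx /=; lia.
by rewrite oppr_eq0 oner_eq0 /=; lia.
Qed.

Lemma supp_mono p q i : (p.1 + p.2 <= n)%N -> (q.1 + q.2 <= n)%N -> leE p q ->
  vab R p ord0 i != 0 -> vab R q ord0 i != 0.
Proof.
move=> hp hq /andP[l1 l2]; rewrite !supp_iff //.
by case/orP => h; apply/orP; [left|right]; lia.
Qed.

Lemma inS_le p : p \in S -> (p.1 + p.2 <= n)%N.
Proof. by move=> h; apply: Estar_le; exact: (fintype.subsetP hS). Qed.

Definition B0 : nat := \max_(q in S) q.2.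
Definition A0 : nat := (n - B0)%N.

Lemma le_B0 q : q \in S -> (q.2 <= B0)%N.
Proof. by move=> h; apply: (@leq_bigmax_cond _ _ (fun q => nat_of_ord q.2)). Qed.

Lemma le_A0 q : q \in S -> (q.1 + B0 <= n)%N.
Proof.
move=> hq.
have ne : (0 < #|S|)%N by apply/card_gt0P; exists q.
have [qm hqm eqm] := @eq_bigmax_cond _ _ (fun q => nat_of_ord q.2) ne.
rewrite -/B0 in eqm.
have hqle := inS_le hq; have hmle := inS_le hqm.
case/orP: (hC hq hqm) => /andP[l1 l2]; first by lia.
have := le_B0 hq; lia.
Qed.

Lemma supp_lo q i : q \in S -> (i < A0)%N -> (vab R q ord0 i != 0) = (i < q.1)%N.
Proof.
move=> hq hi; rewrite supp_iff ?inS_le //; have := le_B0 hq; have := le_A0 hq.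
rewrite /A0 in hi; case: (i < q.1)%N => //=.
by move=> *; apply/negbTE; rewrite -ltnNge; lia.
Qed.

Lemma supp_hi q i : q \in S -> (A0 <= i)%N -> (vab R q ord0 i != 0) = (n - q.2 <= i)%N.
Proof.
move=> hq hi; rewrite supp_iff ?inS_le //; have := le_A0 hq.
rewrite /A0 in hi => h.
have -> : (i < q.1)%N = false by apply/negbTE; rewrite -leqNgt; lia.
by [].
Qed.

Lemma leqNgt' a b : (a <= b)%N -> ~~ (b < a)%N.
Proof. by rewrite leqNgt. Qed.

Definition dd i : nat := #|[set q in S | vab R q ord0 i != 0]%SET|.
Definition M : nat := (2 * n + 1)%N.
Definition tb i : nat := if (i < A0)%N then (2 * (n - i))%N else (2 * i + 1)%N.
Definition absx i : nat := (dd i * M + tb i)%N.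
Definition x0 : 'rV[R]_n := \row_i (if (i < A0)%N then (absx i)%:R else - (absx i)%:R).

Lemma tb_bounds i : (0 < tb i < M)%N.
Proof. by rewrite /tb /M; have := ltn_ord i; case: ifP => _; lia. Qed.

Lemma absx_pos i : (0 < absx i)%N.
Proof. by rewrite /absx; have := tb_bounds i; lia. Qed.

Lemma absx_mod i : (absx i %% M)%N = tb i.
Proof.
by rewrite /absx modnMDl modn_small //; case/andP: (tb_bounds i).
Qed.

Lemma dd_sub i j : (forall q, q \in S -> vab R q ord0 j != 0 -> vab R q ord0 i != 0) ->
  (dd j <= dd i)%N.
Proof.
move=> h; apply/subset_leq_card/fintype.subsetP => q; rewrite !inE => /andP[hq sj].
by rewrite hq h.
Qed.

Lemma dd_lt i j q : q \in S -> vab R q ord0 j != 0 -> vab R q ord0 i == 0 ->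
  (dd i < dd j)%N.
Proof.
move=> hq sj si; apply/proper_card/fintype.properP; split.
  apply/fintype.subsetP => q'; rewrite !inE => /andP[hq' si']; rewrite hq' /=.
  case/orP: (hC hq' hq) => l.
    by have := supp_mono (inS_le hq') (inS_le hq) l si'; rewrite si.
  exact: supp_mono (inS_le hq) (inS_le hq') l sj.
by exists q; rewrite !inE ?hq ?sj //= si.
Qed.

Lemma absx_lt i j : (dd i < dd j)%N -> (absx i < absx j)%N.
Proof.
move=> h; rewrite /absx; have := tb_bounds i; have := tb_bounds j => /andP[_ _] /andP[_ ti].
have : ((dd i).+1 * M <= dd j * M)%N by rewrite leq_mul2r h orbT.
rewrite mulSn.
lia.
Qed.

Lemma x0_coord i : x0 ord0 i = if (i < A0)%N then (absx i)%:R else - (absx i)%:R.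
Proof. by rewrite mxE. Qed.

Lemma x0_compl : arr_complement x0.
Proof.
split.
  move=> i j ij; rewrite /Defs.coord !x0_coord.
  case: (ltnP j A0) => hj.
    have hi : (i < A0)%N by lia.
    rewrite hi ltr_nat /absx.
    have : (dd j <= dd i)%N.
      apply: dd_sub => q hq; rewrite !supp_lo //; lia.
    rewrite /tb hi hj => h.
    have : (dd j * M <= dd i * M)%N by rewrite leq_mul2r h orbT.
    have := ltn_ord j; lia.
  case: (ltnP i A0) => hi.
    have := absx_pos i; have := absx_pos j; rewrite -!(ltr0n R) => a b; lra.
  rewrite ltrN2 ltr_nat /absx.
  have : (dd i <= dd j)%N.
    apply: dd_sub => q hq; rewrite !supp_hi //; lia.
  rewrite /tb (ifF _ _ (negbTE (leqNgt' hi))) (ifF _ _ (negbTE (leqNgt' hj))) => h.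
  have : (dd i * M <= dd j * M)%N by rewrite leq_mul2r h orbT.
  lia.
move=> i j ij; rewrite /lam_perp /= /Defs.coord !x0_coord.
have pi := absx_pos i; have pj := absx_pos j.
case: eqP => [e1|nij].
  subst j; case: ifP => _ h; move: pi; rewrite -(ltr0n R); lra.
have ij' : (i < j)%N by rewrite ltn_neqAle ij andbT; apply/eqP => e1; apply: nij; exact: val_inj.
case: (ltnP i A0) => hi; case: (ltnP j A0) => hj.
- by move: pi pj; rewrite -!(ltr0n R); lra.
- move=> e1; have : absx i = absx j.
    by apply/eqP; rewrite -(eqr_nat R); apply/eqP; lra.
  move/(congr1 (fun m => (m %% M)%N)); rewrite !absx_mod /tb hi ltnNge hj /=.
  lia.
- lia.
- by move: pi pj; rewrite -!(ltr0n R); lra.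
Qed.

Lemma e_x0 i : e x0 i = if (i < A0)%N then 1 else -1.
Proof.
rewrite /e x0_coord; have := absx_pos i; rewrite -(ltr0n R) => p.
case: (ltnP i A0) => _; first by rewrite p.
by rewrite oppr_gt0 ltNge (ltW p).
Qed.

Lemma ev q i : q \in S -> e x0 i * vab R q ord0 i = (vab R q ord0 i != 0)%:R.
Proof.
move=> hq; rewrite e_x0 vab_coord; have a := le_A0 hq; have b := le_B0 hq; rewrite /A0.
case: (ltnP i (n - B0)) => hi; case: (ltnP i q.1) => h1.
- by rewrite mulr1 oner_eq0.
- have h2 : (i < n - q.2)%N by lia.
  by rewrite h2 mulr0 eqxx.
- lia.
- by case: ifP => _; rewrite ?mulr0 ?eqxx ?mulrNN ?mulr1 ?oppr_eq0 ?oner_eq0.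
Qed.

Lemma Mx_x0 q : q \in S -> Mx x0 (vab R q).
Proof.
move=> hq; split => [i|i j h]; rewrite !ev //.
case: (boolP (vab R q ord0 j != 0)) => sj; last by case: (vab R q ord0 i != 0).
case: (boolP (vab R q ord0 i != 0)) => si //.
exfalso; move: si; rewrite negbK => si.
have := absx_lt (dd_lt hq sj si); rewrite -(ltr_nat R).
move: h; rewrite rk_lt /ax !x0_coord; case: ifP => _; case: ifP => _;
rewrite ?normrN !normr_nat; lra.
Qed.

End Constr.

Unset Implicit Arguments.

Theorem theorem1p23 (R : realType) (n k : nat) :
  [/\ (forall F : set 'rV[R]_n, kface k F -> kchain k (face_to_set F)),
      (forall F G : set 'rV[R]_n, kface k F -> kface k G ->
          face_to_set F = face_to_set G -> F = G)
    & (forall S : {set 'I_n.+1 * 'I_n.+1}, kchain k S ->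
          exists F : set 'rV[R]_n, kface k F /\ face_to_set F = S)].
Proof.
split.
- move=> F [/face_inv [x hx [Z ->]] sd]; split.
  + by apply/fintype.subsetP => p; exact: FS_Estar.
  + by move=> p q; exact: chain_Fz.
  + by move/(span_dim_Fz Z k hx): sd => ->.
- move=> F G [/face_inv [x hx [Z eF]] _] [/face_inv [y hy [Z' eG]] _] e.
  rewrite eF eG (Fz_pcone Z hx) (Fz_pcone Z' hy) -eF -eG e.
  by [].
- move=> S [hS hC cS].
  have hx := x0_compl R hS hC.
  pose Z := fun r : nat => [exists q in S, vab R q == G (x0 R S) r].
  have eS : face_to_set (Fz (x0 R S) Z) = S.
    apply/setP => p; rewrite FS_Fz //; apply/andP/idP.
      case=> hE /existsP [r /andP[/existsP [q /andP[hq /eqP eq]] /eqP ep]].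
      have : p = q.
        apply: (vab_inj (R:=R)) (Estar_le hE) (Estar_le (fintype.subsetP hS _ hq)) _.
        by rewrite ep eq.
      by move=> ->.
    move=> hp; have hE := fintype.subsetP hS _ hp; split => //.
    have [r hr ep] := vab_G hx hE (Mx_x0 R hS hC hp).
    apply/existsP; exists (Ordinal hr); rewrite /= ep eqxx andbT.
    by apply/existsP; exists p; rewrite hp ep eqxx.
  exists (Fz (x0 R S) Z); split => //; split; first exact: Fz_face.
  by apply/(span_dim_Fz Z k hx); rewrite eS cS.
Qed.
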